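(* Assume the two-system setup, let $x_2^s$ be a steady-state map and $(x_1^s,x_2^s(x_1^s))$ a steady state. Then the Jacobian $J$ of the vector field of the predictive-sensitivity system at $(x_1^s,x_2^s(x_1^s))$ is similar to $$\begin{bmatrix}\nabla_{x_1}f_1^r(x_1^s) & \nabla_{x_2}f_1(x_1^s,x_2^s(x_1^s))\\ 0 & \nabla_{x_2}f_2(x_1^s,x_2^s(x_1^s))\end{bmatrix}.$$
   Context: Two-system setup: Let $f_1:\mathbb{R}^{n_1}\times\mathbb{R}^{n_2}\to\mathbb{R}^{n_1}$ and $f_2:\mathbb{R}^{n_1}\times\mathbb{R}^{n_2}\to\mathbb{R}^{n_2}$ be continuously differentiable, and assume $\nabla_{x_2}f_2(x_1,x_2)$ is invertible for all $(x_1,x_2)$. Define the extended sensitivity $S_{x_1}^{x_2}(x_1,x_2):=-\nabla_{x_2}f_2(x_1,x_2)^{-1}\nabla_{x_1}f_2(x_1,x_2)\in\mathbb{R}^{n_2\times n_1}$. The predictive-sensitivity system is $$\begin{bmatrix} I&0\\ -S_{x_1}^{x_2}(x_1,x_2)&I\end{bmatrix}\begin{bmatrix}\dot x_1\\ \dot x_2\end{bmatrix}=\begin{bmatrix}f_1(x_1,x_2)\\ f_2(x_1,x_2)\end{bmatrix},$$ i.e. $\dot x_1=f_1(x_1,x_2)$, $\dot x_2=f_2(x_1,x_2)+S_{x_1}^{x_2}(x_1,x_2)f_1(x_1,x_2)$; it is assumed that this right-hand side is locally Lipschitz continuous. A steady-state map is a continuously differentiable map $x_2^s$ defined on an open set $U\subseteq\mathbb{R}^{n_1}$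 with $f_2(x_1,x_2^s(x_1))=0$ for all $x_1\in U$ (then $\nabla_{x_1}x_2^s(x_1)=S_{x_1}^{x_2}(x_1,x_2^s(x_1))$). The reduced vector field is $f_1^r(x_1):=f_1(x_1,x_2^s(x_1))$, with Jacobian $\nabla_{x_1}f_1^r(x_1)=\nabla_{x_1}f_1(x_1,x_2^s(x_1))+\nabla_{x_2}f_1(x_1,x_2^s(x_1))\nabla_{x_1}x_2^s(x_1)$. A steady state is a point $(x_1^s,x_2^s(x_1^s))$ with $f_1^r(x_1^s)=0$. *)

(* Defs.v *)
From HB Require Import structures.
From mathcomp Require Import all_boot all_order all_algebra.
From mathcomp Require Import all_classical all_reals all_analysis.
Set Implicit Arguments. Unset Strict Implicit. Unset Printing Implicit Defensive.
Import Order.TTheory GRing.Theory Num.Theory.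
Import numFieldNormedType.Exports.
Local Open Scope classical_set_scope.
Local Open Scope ring_scope.

(* MathComp-Analysis' [jacobian f p]
   is the matrix M with ('d f p) v = v *m M, i.e. the TRANSPOSE of the usual
   Jacobian.  [jac f p] is the usual (m x n) Jacobian matrix of f : R^n -> R^m. *)
Definition jac {R : realType} (n m : nat) (f : 'rV[R]_n -> 'rV[R]_m) (p : 'rV[R]_n)
  : 'M[R]_(m, n) := (jacobian f p)^T.

Definition uncurry2 {R : realType} (n1 n2 k : nat)
  (f : 'rV[R]_n1 -> 'rV[R]_n2 -> 'rV[R]_k) (z : 'rV[R]_(n1 + n2)) : 'rV[R]_k :=
  f (lsubmx z) (rsubmx z).

Definition C1 {R : realType} (n m : nat) (f : 'rV[R]_n -> 'rV[R]_m) : Prop :=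
  (forall z, differentiable f z) /\ continuous (fun z => jac f z).

Definition C1_on {R : realType} (n m : nat) (U : set 'rV[R]_n)
  (f : 'rV[R]_n -> 'rV[R]_m) : Prop :=
  forall x, U x -> differentiable f x /\ {for x, continuous (fun z => jac f z)}.

Definition locally_lipschitz {R : realType} (n m : nat) (g : 'rV[R]_n -> 'rV[R]_m) : Prop :=
  forall z, exists2 r : R, 0 < r & exists L : R,
    forall a b, ball z r a -> ball z r b -> `|g a - g b| <= L * `|a - b|.

Definition mx_similar {R : realType} (n : nat) (A B : 'M[R]_n) : Prop :=
  exists2 P : 'M[R]_n, P \in unitmx & A = P *m B *m invmx P.

Definition jac_x1 {R : realType} (n1 n2 k : nat)
  (f : 'rV[R]_n1 -> 'rV[R]_n2 -> 'rV[R]_k) x1 x2 : 'M[R]_(k, n1) :=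
  jac (fun y => f y x2) x1.
Definition jac_x2 {R : realType} (n1 n2 k : nat)
  (f : 'rV[R]_n1 -> 'rV[R]_n2 -> 'rV[R]_k) x1 x2 : 'M[R]_(k, n2) :=
  jac (fun y => f x1 y) x2.

Definition sens {R : realType} (n1 n2 : nat)
  (f2 : 'rV[R]_n1 -> 'rV[R]_n2 -> 'rV[R]_n2) x1 x2 : 'M[R]_(n2, n1) :=
  - (invmx (jac_x2 f2 x1 x2) *m jac_x1 f2 x1 x2).

(* Right-hand side of the predictive-sensitivity system, on R^(n1+n2):
   (x1,x2) |-> (f1(x1,x2), f2(x1,x2) + S(x1,x2) f1(x1,x2))
   (the product S f1 of column vectors is written with transposes). *)
Definition ps_field {R : realType} (n1 n2 : nat)
  (f1 : 'rV[R]_n1 -> 'rV[R]_n2 -> 'rV[R]_n1)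
  (f2 : 'rV[R]_n1 -> 'rV[R]_n2 -> 'rV[R]_n2) (z : 'rV[R]_(n1 + n2))
  : 'rV[R]_(n1 + n2) :=
  let x1 := lsubmx z in let x2 := rsubmx z in
  row_mx (f1 x1 x2) (f2 x1 x2 + (sens f2 x1 x2 *m (f1 x1 x2)^T)^T).

(* Main.v *)
Require Import Defs.
From HB Require Import structures.
From mathcomp Require Import all_boot all_order all_algebra.
From mathcomp Require Import all_classical all_reals all_analysis.
From mathcomp Require Import ring lra.
Import Order.TTheory GRing.Theory Num.Theory.
Import numFieldNormedType.Exports.
Local Open Scope classical_set_scope.
Local Open Scope ring_scope.
Set Implicit Arguments. Unset Strict Implicit. Unset Printing Implicit Defensive.

Section H1.
Variable R : realType.

Lemma mx_entry_le m n (A : 'M[R]_(m, n)) i j : `|A i j| <= `|A|.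
Proof.
rewrite [leRHS]/Num.Def.normr /= mx_normrE.
by apply/bigmax_geP; right; exists (i, j).
Qed.

Lemma mx_norm_le m n (A : 'M[R]_(m, n)) c : 0 <= c ->
  (forall i j, `|A i j| <= c) -> `|A| <= c.
Proof.
move=> c0 H; rewrite [leLHS]/Num.Def.normr /= mx_normrE.
by apply: bigmax_le => // -[i j] _; exact: H.
Qed.

Lemma mulmx_norm_le m k n (A : 'M[R]_(m, k)) (B : 'M[R]_(k, n)) :
  `|A *m B| <= k%:R * `|A| * `|B|.
Proof.
apply: mx_norm_le; first by rewrite !mulr_ge0.
move=> i j; rewrite mxE.
apply: (le_trans (ler_norm_sum _ _ _)).
rewrite -mulrA -[k in k%:R]card_ord mulr_natl -sumr_const.
apply: ler_sum => l _; rewrite normrM.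
by apply: ler_pM => //; exact: mx_entry_le.
Qed.

End H1.

Section H2.
Variable R : realType.
Context {T : Type} (F : set_system T) {FF : Filter F}.

Lemma cvg_mx_entries m n (g : T -> 'M[R]_(m, n)) (M : 'M[R]_(m, n)) :
  (forall i j, (fun t => g t i j) @ F --> M i j) -> g @ F --> M.
Proof.
move=> H A [P MP sPA]; rewrite /= /nbhs /=.
apply: (filterS (fun t Pt => sPA (g t) Pt)).
apply: filter_forall => i; apply: filter_forall => j.
exact: (H i j _ (MP i j)).
Qed.

Lemma cvg_entry m n (g : T -> 'M[R]_(m, n)) (M : 'M[R]_(m, n)) i j :
  g @ F --> M -> (fun t => g t i j) @ F --> M i j.
Proof. by move=> H; apply: (continuous_cvg _ (@coord_continuous R m n i j M) H). Qed.

Lemma cvg_bigsum (I : finType) (P : pred I) (f : I -> T -> R) (l : I -> R) :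
  (forall i, f i @ F --> l i) ->
  (fun t => \sum_(i | P i) f i t) @ F --> \sum_(i | P i) l i.
Proof.
move=> H; rewrite unlock /=.
elim: (index_enum I) => [|a s IH] /=; first exact: cvg_cst.
case: (P a) => //; exact: cvgD.
Qed.

Lemma cvg_bigprod (I : finType) (P : pred I) (f : I -> T -> R) (l : I -> R) :
  (forall i, f i @ F --> l i) ->
  (fun t => \prod_(i | P i) f i t) @ F --> \prod_(i | P i) l i.
Proof.
move=> H; rewrite unlock /=.
elim: (index_enum I) => [|a s IH] /=; first exact: cvg_cst.
case: (P a) => //; exact: cvgM.
Qed.

Lemma cvg_mulmx m k n (f : T -> 'M[R]_(m, k)) (g : T -> 'M[R]_(k, n)) (A : 'M[R]_(m, k)) (B : 'M[R]_(k, n)) :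
  f @ F --> A -> g @ F --> B -> (fun t => f t *m g t) @ F --> A *m B.
Proof.
move=> Hf Hg; apply: cvg_mx_entries => i j; rewrite mxE.
under eq_fun do rewrite mxE.
apply: cvg_bigsum => l; apply: cvgM; exact: cvg_entry.
Qed.

Lemma cvg_det n (f : T -> 'M[R]_n) (A : 'M[R]_n) :
  f @ F --> A -> (fun t => \det (f t)) @ F --> \det A.
Proof.
move=> Hf; rewrite /determinant; apply: cvg_bigsum => s.
apply: cvgM; first exact: cvg_cst.
apply: cvg_bigprod => i; exact: cvg_entry.
Qed.

Lemma cvg_adj n (f : T -> 'M[R]_n) (A : 'M[R]_n) :
  f @ F --> A -> (fun t => \adj (f t)) @ F --> \adj A.
Proof.
move=> Hf; apply: cvg_mx_entries => i j; rewrite mxE.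
under eq_fun do rewrite mxE.
rewrite /cofactor; apply: cvgM; first exact: cvg_cst.
apply: cvg_det; apply: cvg_mx_entries => k l; rewrite !mxE.
under eq_fun do rewrite !mxE.
exact: cvg_entry.
Qed.


Lemma cvg_invmx n (f : T -> 'M[R]_n) (A : 'M[R]_n) :
  A \in unitmx -> f @ F --> A -> (fun t => invmx (f t)) @ F --> invmx A.
Proof.
move=> uA Hf.
have Hd := cvg_det Hf.
have dA0 : \det A != 0 by rewrite -unitfE -unitmxE.
have Hn := cvgr_neq0 _ Hd dA0.
have H2 : (fun t => (\det (f t))^-1 *: \adj (f t)) @ F --> invmx A.
  rewrite /invmx uA; apply: cvgZ; last exact: cvg_adj.
  exact: (cvgV dA0 Hd).
have E : {near F, (fun t => (\det (f t))^-1 *: \adj (f t)) =1 (fun t => invmx (f t))}.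
  near=> t; rewrite /invmx unitmxE unitfE.
  by have -> : \det (f t) != 0 by near: t; exact: Hn.
exact: (cvg_trans (near_eq_cvg E) H2).
Unshelve. all: by end_near. Qed.

End H2.

Section H3.
Variable R : realType.

Lemma diff_of_bound (V W : normedModType R) (f : V -> W) (L : {linear V -> W}) x :
  continuous L ->
  (forall e : R, 0 < e -> \forall h \near (0 : V), `|f (h + x) - f x - L h| <= e * `|h|) ->
  differentiable f x /\ 'd f x = L :> (V -> W).
Proof.
move=> Lc H.
have E : f \o shift x = cst (f x) + L +o_ (0 : V) id.
  apply/eqaddoP => e e0; near=> h.
  rewrite /= !fctE opprD addrA; near: h; exact: H.
have dL : 'd f x = L :> (V -> W) by apply: diff_unique.
split => //; apply/diff_locallyP; rewrite dL; split => //.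
Unshelve. all: by end_near. Qed.

Lemma diff_jac n m (f : 'rV[R]_n -> 'rV[R]_m) z h :
  'd f z h = h *m jacobian f z.
Proof. by rewrite /jacobian mul_rV_lin1. Qed.

Lemma jacobian_eq n m (f : 'rV[R]_n -> 'rV[R]_m) z (M : 'M[R]_(n, m)) :
  (forall h, 'd f z h = h *m M) -> jacobian f z = M.
Proof.
move=> H; apply/row_matrixP => i; rewrite !rowE.
by rewrite -diff_jac H.
Qed.

Lemma mulmxr_continuous k n m (M : 'M[R]_(n, m)) :
  continuous (fun h : 'M[R]_(k, n) => h *m M).
Proof.
move=> h; exact: (@cvg_mulmx R _ (nbhs h) _ _ _ _ (fun h => h) (fun=> M) h M cvg_id (cvg_cst _)).
Qed.


Lemma diff_affine (V W : normedModType R) (f : V -> W) (L : {linear V -> W}) x :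
  continuous L -> (forall h, f (h + x) = f x + L h) ->
  differentiable f x /\ 'd f x = L :> (V -> W).
Proof.
move=> Lc Hf; apply: (diff_of_bound Lc) => e e0; near=> h.
by rewrite Hf [f x + _]addrC addrK subrr normr0 mulr_ge0 // ltW.
Unshelve. all: by end_near. Qed.

Lemma diff_bound (V W : normedModType R) (f : V -> W) x :
  differentiable f x -> forall e : R, 0 < e ->
  \forall h \near (0 : V), `|f (h + x) - f x - 'd f x h| <= e * `|h|.
Proof.
move=> /diff_locally /eqaddoP H e e0; have := H e e0.
by apply: filterS => h; rewrite /= !fctE opprD addrA.
Qed.

Lemma row_mx0_norm m n1 n2 (v : 'M[R]_(m, n2)) :
  `|row_mx (0 : 'M[R]_(m, n1)) v| <= `|v|.
Proof.
apply: mx_norm_le => // i j; rewrite mxE; case: splitP => k _.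
  by rewrite mxE normr0.
exact: mx_entry_le.
Qed.

End H3.

Section Partial.
Variables (R : realType) (n1 n2 k : nat).

Lemma jac_x1E (f : 'rV[R]_n1 -> 'rV[R]_n2 -> 'rV[R]_k) x1 x2 :
  differentiable (uncurry2 f) (row_mx x1 x2) ->
  jac_x1 f x1 x2 = (usubmx (jacobian (uncurry2 f) (row_mx x1 x2)))^T.
Proof.
move=> df; rewrite /jac_x1 /jac; congr trmx.
pose g := fun y : 'rV[R]_n1 => row_mx y x2.
have Eg : (fun y => f y x2) = uncurry2 f \o g.
  by apply: funext => y; rewrite /= /uncurry2 /g row_mxKl row_mxKr.
have [dg Dg] : differentiable g x1 /\
    'd g x1 = mulmxr (row_mx 1%:M (0 : 'M[R]_(n1, n2))) :> (_ -> _).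
  apply: diff_affine; first exact: mulmxr_continuous.
  move=> h; rewrite /g /= mul_mx_row mulmx1 mulmx0 add_row_mx addr0.
  by rewrite addrC.
apply: jacobian_eq => h; rewrite Eg diff_comp // /= Dg diff_jac /=.
rewrite mul_mx_row mulmx1 mulmx0.
by rewrite -{1}(vsubmxK (jacobian (uncurry2 f) (row_mx x1 x2))) mul_row_col mul0mx addr0.
Qed.

Lemma jac_x2E (f : 'rV[R]_n1 -> 'rV[R]_n2 -> 'rV[R]_k) x1 x2 :
  differentiable (uncurry2 f) (row_mx x1 x2) ->
  jac_x2 f x1 x2 = (dsubmx (jacobian (uncurry2 f) (row_mx x1 x2)))^T.
Proof.
move=> df; rewrite /jac_x2 /jac; congr trmx.
pose g := fun y : 'rV[R]_n2 => row_mx x1 y.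
have Eg : (fun y => f x1 y) = uncurry2 f \o g.
  by apply: funext => y; rewrite /= /uncurry2 /g row_mxKl row_mxKr.
have [dg Dg] : differentiable g x2 /\
    'd g x2 = mulmxr (row_mx (0 : 'M[R]_(n2, n1)) 1%:M) :> (_ -> _).
  apply: diff_affine; first exact: mulmxr_continuous.
  move=> h; rewrite /g /= mul_mx_row mulmx1 mulmx0 add_row_mx addr0.
  by rewrite addrC.
apply: jacobian_eq => h; rewrite Eg diff_comp // /= Dg diff_jac /=.
rewrite mul_mx_row mulmx1 mulmx0.
by rewrite -{1}(vsubmxK (jacobian (uncurry2 f) (row_mx x1 x2))) mul_row_col mul0mx add0r.
Qed.

End Partial.

Section Reduced.
Variables (R : realType) (n1 n2 k : nat).

Lemma reduced_jac (f : 'rV[R]_n1 -> 'rV[R]_n2 -> 'rV[R]_k) (x2s : 'rV[R]_n1 -> 'rV[R]_n2) x :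
  differentiable x2s x -> differentiable (uncurry2 f) (row_mx x (x2s x)) ->
  differentiable (fun y => f y (x2s y)) x /\
  jacobian (fun y => f y (x2s y)) x =
    usubmx (jacobian (uncurry2 f) (row_mx x (x2s x))) +
    jacobian x2s x *m dsubmx (jacobian (uncurry2 f) (row_mx x (x2s x))).
Proof.
move=> dx df.
pose g := fun y : 'rV[R]_n1 => row_mx y (x2s y).
have Eg : (fun y => f y (x2s y)) = uncurry2 f \o g.
  by apply: funext => y; rewrite /= /uncurry2 /g row_mxKl row_mxKr.
have [dg Dg] : differentiable g x /\
    'd g x = mulmxr (row_mx 1%:M (jacobian x2s x)) :> (_ -> _).
  apply: diff_of_bound; first exact: mulmxr_continuous.
  move=> e e0; have := diff_bound dx e0; apply: filterS => h Hh.
  rewrite /g /= mul_mx_row mulmx1 -diff_jac !opp_row_mx !add_row_mx.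
  rewrite addrK subrr; apply: le_trans Hh; exact: row_mx0_norm.
split; first by rewrite Eg; apply: differentiable_comp.
apply: jacobian_eq => h; rewrite Eg diff_comp // /= Dg diff_jac /=.
rewrite -mulmxA; congr (_ *m _).
by rewrite -{1}(vsubmxK (jacobian (uncurry2 f) (row_mx x (x2s x)))) mul_row_col mul1mx.
Qed.

End Reduced.

Lemma jac_zero_near (R : realType) n m (G : 'rV[R]_n -> 'rV[R]_m) x :
  differentiable G x -> (\forall y \near x, G y = 0) -> jacobian G x = 0.
Proof.
move=> dG H; apply/row_matrixP => i; rewrite rowE row0 -deriveEjacobian //.
have H' : \forall y \near x, G y = cst (0 : 'rV[R]_m) y by [].
by rewrite (near_eq_derive _ H') derive_cst.
Qed.

Section CvgMore.
Variable R : realType.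
Context {T : Type} (F : set_system T) {FF : Filter F}.

Lemma cvg_trmx m n (f : T -> 'M[R]_(m, n)) (A : 'M[R]_(m, n)) :
  f @ F --> A -> (fun t => (f t)^T) @ F --> A^T.
Proof.
move=> H; apply: cvg_mx_entries => i j; rewrite mxE.
under eq_fun do rewrite mxE.
exact: cvg_entry.
Qed.

Lemma cvg_usubmx m1 m2 n (f : T -> 'M[R]_(m1 + m2, n)) (A : 'M[R]_(m1 + m2, n)) :
  f @ F --> A -> (fun t => usubmx (f t)) @ F --> usubmx A.
Proof.
move=> H; apply: cvg_mx_entries => i j; rewrite mxE.
under eq_fun do rewrite mxE.
exact: cvg_entry.
Qed.

Lemma cvg_dsubmx m1 m2 n (f : T -> 'M[R]_(m1 + m2, n)) (A : 'M[R]_(m1 + m2, n)) :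
  f @ F --> A -> (fun t => dsubmx (f t)) @ F --> dsubmx A.
Proof.
move=> H; apply: cvg_mx_entries => i j; rewrite mxE.
under eq_fun do rewrite mxE.
exact: cvg_entry.
Qed.

End CvgMore.

Definition Kf (R : realType) n1 n2 (f2 : 'rV[R]_n1 -> 'rV[R]_n2 -> 'rV[R]_n2)
  (z : 'rV[R]_(n1 + n2)) : 'M[R]_(n1, n1 + n2) :=
  row_mx 1%:M 0 + (sens f2 (lsubmx z) (rsubmx z))^T *m row_mx 0 1%:M.

Section Kcont.
Variables (R : realType) (n1 n2 : nat).
Variable f2 : 'rV[R]_n1 -> 'rV[R]_n2 -> 'rV[R]_n2.
Hypothesis d2 : forall z, differentiable (uncurry2 f2) z.
Hypothesis c2 : continuous (fun z => jac (uncurry2 f2) z).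
Hypothesis Hunit : forall x1 x2, jac_x2 f2 x1 x2 \in unitmx.

Lemma sensE (z : 'rV[R]_(n1 + n2)) : sens f2 (lsubmx z) (rsubmx z) =
  - (invmx (dsubmx (jacobian (uncurry2 f2) z))^T *m (usubmx (jacobian (uncurry2 f2) z))^T).
Proof. by rewrite /sens jac_x2E ?hsubmxK // jac_x1E ?hsubmxK. Qed.

Lemma Kf_cont p : (fun z => Kf f2 z) @ p --> Kf f2 p.
Proof.
have Fp : Filter (nbhs p) by apply: nbhs_filter.
have cJ : (fun z => jacobian (uncurry2 f2) z) @ p --> jacobian (uncurry2 f2) p.
  have c2p : (fun z => jac (uncurry2 f2) z) @ p --> jac (uncurry2 f2) p by apply: c2.
  have E : (fun z => (jac (uncurry2 f2) z)^T) = (fun z => jacobian (uncurry2 f2) z).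
    by apply: funext => z; rewrite /jac trmxK.
  have := cvg_trmx c2p; rewrite E.
  by move=> H; rewrite /jac trmxK in H; exact: H.
have uD : (dsubmx (jacobian (uncurry2 f2) p))^T \in unitmx.
  by have := Hunit (lsubmx p) (rsubmx p); rewrite jac_x2E ?hsubmxK.
rewrite /Kf.
have HS : (fun z => sens f2 (lsubmx z) (rsubmx z)) @ p --> sens f2 (lsubmx p) (rsubmx p).
  under eq_fun do rewrite sensE; rewrite sensE.
  have H1 := cvg_invmx uD (cvg_trmx (cvg_dsubmx cJ)).
  have H2 := cvg_trmx (cvg_usubmx cJ).
  exact: (cvgN (cvg_mulmx (H1 Fp Fp Fp) (H2 Fp Fp))).
have HT := cvg_mulmx (cvg_trmx HS) (cvg_cst (row_mx (0 : 'M[R]_(n2, n1)) 1%:M)).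
have HC := @cvg_cst _ (row_mx 1%:M (0 : 'M[R]_(n1, n2))) _ (nbhs p) Fp.
exact: (cvgD HC (HT Fp Fp Fp)).
Qed.

End Kcont.

Lemma resid_id (R : realType) n m1 m2 k (a : 'M[R]_(1, m1)) (c d : 'M[R]_(1, m2))
  (h : 'M[R]_(1, n)) (M1 : 'M[R]_(n, m1)) (M2 : 'M[R]_(n, m2))
  (K1 K0 : 'M[R]_(m1, k)) (E : 'M[R]_(m2, k)) :
  a *m K1 + c *m E - (0 *m K0 + d *m E) - h *m (M1 *m K0 + M2 *m E) =
  (a - 0 - h *m M1) *m K1 + (h *m M1) *m (K1 - K0) + (c - d - h *m M2) *m E.
Proof.
rewrite !mul0mx !subr0 add0r !mulmxBl !mulmxBr mulmxDr !mulmxA.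
rewrite opprD !addrA subrK; congr (_ - _).
by rewrite [in RHS](addrAC (a *m K1)) [in RHS](addrAC (a *m K1 + c *m E)).
Qed.

Lemma mulmx_norm_bound (R : realType) m k n (A : 'M[R]_(m, k)) (B : 'M[R]_(k, n)) (N a b : R) :
  k%:R <= N -> `|A| <= a -> `|B| <= b -> `|A *m B| <= N * a * b.
Proof.
move=> Hk Ha Hb; apply: le_trans (mulmx_norm_le A B) _.
apply: ler_pM => //.
by apply: ler_pM.
Qed.

Lemma norm_tri (R : realType) m n (A B : 'M[R]_(m, n)) : `|B| <= `|A| + `|A - B|.
Proof. by have := ler_normB A (A - B); rewrite subKr. Qed.
Lemma nat_le1 (R : realType) (n1 n2 : nat) : (n1%:R : R) <= (n1 + n2)%:R.
Proof. by rewrite ler_nat leq_addr. Qed.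
Lemma nat_le2 (R : realType) (n1 n2 : nat) : (n2%:R : R) <= (n1 + n2)%:R.
Proof. by rewrite ler_nat leq_addl. Qed.

Section PS.
Variables (R : realType) (n1 n2 : nat).
Variable f1 : 'rV[R]_n1 -> 'rV[R]_n2 -> 'rV[R]_n1.
Variable f2 : 'rV[R]_n1 -> 'rV[R]_n2 -> 'rV[R]_n2.

Lemma psE z : ps_field f1 f2 z =
  uncurry2 f1 z *m Kf f2 z + uncurry2 f2 z *m row_mx (0 : 'M[R]_(n2, n1)) 1%:M.
Proof.
rewrite /ps_field /Kf /uncurry2 mulmxDr mulmxA !mul_mx_row !mulmx1 !mulmx0.
rewrite !add_row_mx addr0 ?add0r trmx_mul trmxK.
by rewrite addr0 [in RHS]addrC.
Qed.

Hypothesis d1 : forall z, differentiable (uncurry2 f1) z.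
Hypothesis d2 : forall z, differentiable (uncurry2 f2) z.
Hypothesis c2 : continuous (fun z => jac (uncurry2 f2) z).
Hypothesis Hunit : forall x1 x2, jac_x2 f2 x1 x2 \in unitmx.

Lemma ps_diff p : uncurry2 f1 p = 0 ->
  differentiable (ps_field f1 f2) p /\
  jacobian (ps_field f1 f2) p = jacobian (uncurry2 f1) p *m Kf f2 p +
     jacobian (uncurry2 f2) p *m row_mx (0 : 'M[R]_(n2, n1)) 1%:M.
Proof.
move=> F0.
set E := row_mx (0 : 'M[R]_(n2, n1)) 1%:M.
set M1 := jacobian (uncurry2 f1) p.
set M2 := jacobian (uncurry2 f2) p.
set K0 := Kf f2 p.
suff [dps Dps] : differentiable (ps_field f1 f2) p /\
    'd (ps_field f1 f2) p = mulmxr (M1 *m K0 + M2 *m E) :> (_ -> _).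
  by split => //; apply: jacobian_eq => h; rewrite Dps.
apply: diff_of_bound; first exact: mulmxr_continuous.
move=> e e0.
pose N : R := (n1 + n2)%:R.
have N0 : 0 <= N by [].
pose Q := N * (`|K0| + 1 + N * `|M1| + `|E|) + 1.
have Q0 : 0 < Q.
  by rewrite /Q ltr_wpDl // mulr_ge0 // !addr_ge0 // mulr_ge0.
pose dl := e / Q.
have dl0 : 0 < dl by rewrite divr_gt0.
have HK : (fun z => Kf f2 z) @ p --> Kf f2 p by exact: Kf_cont.
have HKs : (Kf f2 \o shift p) @ (0 : 'rV[R]_(n1 + n2)) --> Kf f2 p.
  by rewrite cvg_comp_shift add0r.
have HK1 := cvgr_dist_le _ _ HKs _ (@ltr01 R).
have HKd := cvgr_dist_le _ _ HKs _ dl0.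
have H1 := diff_bound (d1 p) dl0.
have H2 := diff_bound (d2 p) dl0.
near=> h.
have k1 : `|K0 - Kf f2 (h + p)| <= 1.
  by near: h; apply: HK1; exact: nbhs_filter.
have kd : `|K0 - Kf f2 (h + p)| <= dl.
  by near: h; apply: HKd; exact: nbhs_filter.
have r1 : `|uncurry2 f1 (h + p) - 0 - h *m M1| <= dl * `|h|.
  by rewrite -F0 /M1 -diff_jac; near: h; exact: H1.
have r2 : `|uncurry2 f2 (h + p) - uncurry2 f2 p - h *m M2| <= dl * `|h|.
  by rewrite /M2 -diff_jac; near: h; exact: H2.
rewrite [X in `|_ - X|](_ : _ = h *m (M1 *m K0 + M2 *m E)) //.
rewrite !psE F0 -/E -/K0 (resid_id (uncurry2 f1 (h + p)) (uncurry2 f2 (h + p)) (uncurry2 f2 p) h M1 M2 (Kf f2 (h + p)) K0 E).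
set K1 := Kf f2 (h + p).
have nK1 : `|K1| <= `|K0| + 1.
  by apply: le_trans (norm_tri K0 K1) _; rewrite lerD2l.
have Nn1 : n1%:R <= N by exact: nat_le1.
have Nn2 : n2%:R <= N by exact: nat_le2.
have NN : (n1 + n2)%:R <= N by [].
have b1 := mulmx_norm_bound Nn1 r1 nK1.
have hM : `|h *m M1| <= N * `|h| * `|M1| by apply: mulmx_norm_bound.
have kd' : `|K1 - K0| <= dl by rewrite distrC.
have b2 := mulmx_norm_bound Nn1 hM kd'.
have b3 := mulmx_norm_bound Nn2 r2 (lexx `|E|).
apply: le_trans (ler_normD _ _) _.
apply: le_trans (lerD (ler_normD _ _) b3) _.
apply: le_trans (lerD (lerD b1 b2) (lexx _)) _.
have -> : e = dl * Q by rewrite /dl divfK // gt_eqF.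
set X := N * (`|K0| + 1 + N * `|M1| + `|E|).
have -> : N * (dl * `|h|) * (`|K0| + 1) + N * (N * `|h| * `|M1|) * dl +
  N * (dl * `|h|) * `|E| = dl * `|h| * X by rewrite /X; ring.
rewrite /Q -/X mulrAC; apply: ler_wpM2r => //.
by apply: ler_wpM2l; [exact: ltW | rewrite lerDl].
Unshelve. all: by end_near.
Qed.

End PS.
Lemma final_alg (R : realType) n1 n2 (U1 : 'M[R]_(n1, n1)) (D1 : 'M[R]_(n2, n1))
  (U2 : 'M[R]_(n1, n2)) (D2 : 'M[R]_(n2, n2)) (X : 'M[R]_(n1, n2)) :
  D2^T \in unitmx -> U2 + X *m D2 = 0 ->
  mx_similar ((col_mx U1 D1 *m (row_mx 1%:M 0 + (- (invmx D2^T *m U2^T))^T *m row_mx 0 1%:M)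
              + col_mx U2 D2 *m row_mx 0 1%:M)^T)
     (block_mx ((U1 + X *m D1)^T) D1^T 0 D2^T).
Proof.
move=> uD HZ.
set S := X^T.
have U2E : U2 = - (X *m D2) by apply/eqP; rewrite -addr_eq0 HZ.
have SE : - (invmx D2^T *m U2^T) = S.
  by rewrite U2E linearN /= trmx_mul mulmxN opprK mulKmx.
rewrite SE trmxK mul_mx_row mulmx0 mulmx1 add_row_mx addr0 ?add0r.
rewrite !mul_col_row !mulmx1 !mulmx0 add_block_mx !addr0 tr_block_mx.
set P := block_mx 1%:M 0 S 1%:M : 'M[R]_(n1 + n2).
set Q := block_mx 1%:M 0 (- S) 1%:M : 'M[R]_(n1 + n2).
have PQ : P *m Q = 1%:M.
  rewrite /P /Q mulmx_block !mulmx1 !mul1mx !mulmx0 !mul0mx !addr0 !add0r subrr.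
  by rewrite -scalar_mx_block.
have [uP _] := mulmx1_unit PQ.
have iP : invmx P = Q.
  by rewrite -[invmx P]mulmx1 -PQ mulmxA mulVmx // mul1mx.
exists P => //; rewrite iP /P /Q !mulmx_block.
rewrite !mulmx1 !mul1mx !mulmx0 !mul0mx !addr0 !add0r.
rewrite U2E; congr block_mx.
- by rewrite linearD /= trmx_mul mulmxN addrK.
- rewrite !linearD /= !linearN /= !trmx_mul -/S mulmxDl !mulmxA.
  by rewrite opprD addrA addrK.
- by rewrite linearD /= trmx_mul.
Qed.

Unset Implicit Arguments.

Theorem proposition2 (R : realType) (n1 n2 : nat)
  (f1 : 'rV[R]_n1 -> 'rV[R]_n2 -> 'rV[R]_n1)
  (f2 : 'rV[R]_n1 -> 'rV[R]_n2 -> 'rV[R]_n2)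
  (U : set 'rV[R]_n1) (x2s : 'rV[R]_n1 -> 'rV[R]_n2) (x1s : 'rV[R]_n1) :
  C1 (uncurry2 f1) ->
  C1 (uncurry2 f2) ->
  (forall x1 x2, jac_x2 f2 x1 x2 \in unitmx) ->
  locally_lipschitz (ps_field f1 f2) ->
  open U ->
  C1_on U x2s ->
  (forall x1, U x1 -> f2 x1 (x2s x1) = 0) ->
  U x1s ->
  f1 x1s (x2s x1s) = 0 ->
  let p := row_mx x1s (x2s x1s) in
  differentiable (ps_field f1 f2) p /\
  mx_similar (jac (ps_field f1 f2) p)
    (block_mx (jac (fun x1 => f1 x1 (x2s x1)) x1s) (jac_x2 f1 x1s (x2s x1s))
              0 (jac_x2 f2 x1s (x2s x1s))).
Proof.
move=> [d1 c1] [d2 c2] Hunit _ HU Hx2 Hzero Ux1 Hf1 p.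
have dx2 : differentiable x2s x1s := (Hx2 x1s Ux1).1.
have F0 : uncurry2 f1 p = 0 by rewrite /uncurry2 /p row_mxKl row_mxKr.
have [dps Jps] : differentiable (ps_field f1 f2) p /\
  jacobian (ps_field f1 f2) p = jacobian (uncurry2 f1) p *m Kf f2 p +
     jacobian (uncurry2 f2) p *m row_mx (0 : 'M[R]_(n2, n1)) 1%:M.
  exact: ps_diff.
split => //.
have [_ JR1] := reduced_jac dx2 (d1 p).
have [dG2 JR2] := reduced_jac dx2 (d2 p).
have nU : nbhs x1s U by apply: open_nbhs_nbhs; split.
have Z : jacobian (fun y => f2 y (x2s y)) x1s = 0.
  apply: jac_zero_near => //; apply: filterS nU => y Uy; exact: Hzero.
rewrite JR2 in Z.
have uD : (dsubmx (jacobian (uncurry2 f2) p))^T \in unitmx.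
  by have := Hunit x1s (x2s x1s); rewrite jac_x2E.
have := final_alg (usubmx (jacobian (uncurry2 f1) p)) (dsubmx (jacobian (uncurry2 f1) p)) uD Z.
rewrite !vsubmxK.
rewrite /jac Jps JR1 (jac_x2E (d1 p)) (jac_x2E (d2 p)) /Kf sensE //.
Qed.
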